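(* Let $\Omega\subset\mathbb{S}^m$ be a domain and $\rho\in C^1(\Omega)$. If the associated map $\phi^{\rho}:\Omega\to\mathbb{H}^{m+1}$ is proper, then for every $t\in\mathbb{R}$ the map $\phi_t:=\phi^{\rho+t}:\Omega\to\mathbb{H}^{m+1}$ (associated to $\rho+t$, i.e. to the dilated metric $e^{2t}e^{2\rho}g_0$) is also proper.
   Context: $\mathbb{S}^m\subset\mathbb{R}^{m+1}$ is the unit sphere with round metric $g_0$; $\nabla$ and $|\cdot|$ denote gradient and norm with respect to $g_0$. Let $\mathbb{L}^{m+2}$ be $\mathbb{R}^{m+2}$ with $\langle\!\langle x,y\rangle\!\rangle=-x_0y_0+\sum_{i=1}^{m+1}x_iy_i$, and $\mathbb{H}^{m+1}=\{x:\langle\!\langle x,x\rangle\!\rangle=-1,\ x_0>0\}$. For $\rho\in C^1(\Omega)$ the associated map $\phi^\rho:\Omega\to\mathbb{H}^{m+1}$ is $$\phi^\rho(x)=\frac{e^{\rho(x)}}{2}\Big(1+e^{-2\rho(x)}\big(1+|\nabla\rho(x)|^2\big)\Big)(1,x)+e^{-\rho(x)}\big(0,-x+\nabla\rho(x)\big).$$ (Equivalently $\phi^{\rho+t}=\cosh(t)\phi^\rho-\sinh(t)\eta$ with $\eta=\phi^\rho-e^{\rho}(1,x)$; this family is the parallel flow.) Proper means preimages of compact sets are compact. *)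

(* Defs.v *)
From Stdlib Require Import Reals List.
Open Scope R_scope.

(* Points of R^n are represented as  nat -> R  whose coordinates with index >= n vanish. *)
Definition Vec := nat -> R.

Definition in_Rn (n : nat) (x : Vec) : Prop := forall i, (n <= i)%nat -> x i = 0.

(* Euclidean inner product / norm / distance on the first n coordinates
   (indices 0 .. n-1). *)
Definition dotn (n : nat) (x y : Vec) : R :=
  match n with O => 0 | S k => sum_f_R0 (fun i => x i * y i) k end.
Definition normn (n : nat) (x : Vec) : R := sqrt (dotn n x x).
Definition distn (n : nat) (x y : Vec) : R := normn n (fun i => x i - y i).

Definition openn (n : nat) (U : Vec -> Prop) : Prop :=
  forall x, U x -> exists r, 0 < r /\ forall y, distn n x y < r -> U y.

Definition compactn (n : nat) (K : Vec -> Prop) : Prop :=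
  forall (I : Type) (U : I -> Vec -> Prop),
    (forall i, openn n (U i)) ->
    (forall x, K x -> exists i, U i x) ->
    exists l : list I, forall x, K x -> exists i, In i l /\ U i x.

Definition sphere (m : nat) (x : Vec) : Prop :=
  in_Rn (S m) x /\ dotn (S m) x x = 1.

(* Hyperbolic space H^(m+1) in Minkowski space L^(m+2); coordinate 0 is x_0. *)
Definition lor (m : nat) (x y : Vec) : R :=
  - (x 0%nat * y 0%nat) + sum_f_R0 (fun i => x (S i) * y (S i)) m.
Definition hyp (m : nat) (x : Vec) : Prop :=
  in_Rn (S (S m)) x /\ lor m x x = -1 /\ 0 < x 0%nat.

Definition rel_open_sphere (m : nat) (O : Vec -> Prop) : Prop :=
  forall x, O x -> exists r, 0 < r /\
    forall y, sphere m y -> distn (S m) x y < r -> O y.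

Definition connected_in (n : nat) (O : Vec -> Prop) : Prop :=
  forall U V, openn n U -> openn n V ->
    (forall x, O x -> U x \/ V x) ->
    (forall x, O x -> U x -> V x -> False) ->
    (forall x, O x -> U x) \/ (forall x, O x -> V x).

Definition sphere_domain (m : nat) (O : Vec -> Prop) : Prop :=
  (forall x, O x -> sphere m x) /\ (exists x, O x) /\
  rel_open_sphere m O /\ connected_in (S m) O.

Definition is_gradient_on (m : nat) (O : Vec -> Prop) (rho : Vec -> R) (g : Vec -> Vec) : Prop :=
  forall x, O x ->
    in_Rn (S m) (g x) /\ dotn (S m) x (g x) = 0 /\
    forall eps, 0 < eps -> exists delta, 0 < delta /\
      forall y, O y -> distn (S m) y x < delta ->
        Rabs (rho y - rho x - dotn (S m) (g x) (fun i => y i - x i))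
          <= eps * distn (S m) y x.

Definition continuous_on_vec (m : nat) (O : Vec -> Prop) (g : Vec -> Vec) : Prop :=
  forall x, O x -> forall eps, 0 < eps -> exists delta, 0 < delta /\
    forall y, O y -> distn (S m) y x < delta -> distn (S m) (g y) (g x) < eps.

Definition C1_on (m : nat) (O : Vec -> Prop) (rho : Vec -> R) (g : Vec -> Vec) : Prop :=
  is_gradient_on m O rho g /\ continuous_on_vec m O g.

Definition phi_map (m : nat) (rho : Vec -> R) (g : Vec -> Vec) (x : Vec) : Vec :=
  let a := exp (rho x) / 2 * (1 + exp (-2 * rho x) * (1 + dotn (S m) (g x) (g x))) in
  fun i => match i with
           | O => a
           | S k => if Nat.leb k m
                    then a * x k + exp (- rho x) * (- x k + g x k)
                    else 0
           end.

Definition proper_map (m : nat) (O : Vec -> Prop) (f : Vec -> Vec) : Prop :=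
  forall K : Vec -> Prop, (forall z, K z -> hyp m z) -> compactn (S (S m)) K ->
    compactn (S m) (fun x => O x /\ K (f x)).

(* Main.v *)
Require Import Defs.
From Stdlib Require Import Reals List Lra Lia Psatz Classical FunctionalExtensionality ClassicalEpsilon.
From Coquelicot Require Compactness.
Open Scope R_scope.

Lemma dotn_S n x y : dotn (S n) x y = dotn n x y + x n * y n.
Proof. destruct n; simpl; ring. Qed.

Lemma dotn_ext n x y x' y' : (forall i, (i < n)%nat -> x i * y i = x' i * y' i) ->
  dotn n x y = dotn n x' y'.
Proof.
  induction n; intros H; [reflexivity|]. rewrite !dotn_S, IHn, H; auto; lia.
Qed.

Lemma dotn_comm n x y : dotn n x y = dotn n y x.
Proof. apply dotn_ext; intros; ring. Qed.

Lemma dotn_lin n a b x y z : dotn n (fun i => a * x i + b * y i) z = a * dotn n x z + b * dotn n y z.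
Proof. induction n; [simpl; ring|]. rewrite !dotn_S, IHn; ring. Qed.

Lemma dotn_nonneg n x : 0 <= dotn n x x.
Proof. induction n; [simpl; lra|]. rewrite dotn_S. nra. Qed.

Lemma dotn_coord n x i : (i < n)%nat -> x i * x i <= dotn n x x.
Proof.
  induction n; intros H; [lia|]. rewrite dotn_S.
  destruct (Nat.eq_dec i n) as [->|Hn].
  - pose proof (dotn_nonneg n x); lra.
  - assert (i < n)%nat by lia. specialize (IHn H0). nra.
Qed.

Lemma dotn_zero n x : dotn n x x = 0 -> forall i, (i < n)%nat -> x i = 0.
Proof. intros H i Hi. pose proof (dotn_coord n x i Hi). nra. Qed.

Lemma dotn_bound n x d : 0 <= d -> (forall i, (i < n)%nat -> Rabs (x i) <= d) ->
  dotn n x x <= INR n * (d * d).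
Proof.
  induction n; intros Hd H; [simpl; lra|]. rewrite dotn_S, S_INR.
  assert (dotn n x x <= INR n * (d*d)) by (apply IHn; auto).
  assert (Rabs (x n) <= d) by (apply H; lia).
  assert (x n * x n <= d * d).
  { revert H1. unfold Rabs; destruct Rcase_abs; intros; nra. }
  nra.
Qed.

Lemma dotn_CS n x y : dotn n x y * dotn n x y <= dotn n x x * dotn n y y.
Proof.
  assert (Hq : forall l, 0 <= dotn n x x - 2 * l * dotn n x y + l * l * dotn n y y).
  { intros l. pose proof (dotn_nonneg n (fun i => 1 * x i + (- l) * y i)) as H.
    rewrite dotn_lin in H.
    rewrite (dotn_comm n x), (dotn_comm n y) in H.
    rewrite !dotn_lin in H. rewrite (dotn_comm n y x) in H. nra. }
  pose proof (dotn_nonneg n y) as Hy. destruct (Req_dec (dotn n y y) 0) as [H0|H0].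
  - destruct (Req_dec (dotn n x y) 0) as [H1|H1].
    + rewrite H1, H0. nra.
    + specialize (Hq ((dotn n x x + 1) / (2 * dotn n x y))). rewrite H0 in Hq.
      exfalso. replace (2 * ((dotn n x x + 1) / (2 * dotn n x y)) * dotn n x y) with (dotn n x x + 1) in Hq by (field; auto). lra.
  - specialize (Hq (dotn n x y / dotn n y y)).
    assert (Hp : 0 < dotn n y y) by lra.
    assert (0 <= (dotn n x x - 2 * (dotn n x y / dotn n y y) * dotn n x y +
         dotn n x y / dotn n y y * (dotn n x y / dotn n y y) * dotn n y y) * dotn n y y) by nra.
    replace ((dotn n x x - 2 * (dotn n x y / dotn n y y) * dotn n x y +
         dotn n x y / dotn n y y * (dotn n x y / dotn n y y) * dotn n y y) * dotn n y y) with (dotn n x x * dotn n y y - dotn n x y * dotn n x y) in H by (field; lra). lra.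
Qed.

Lemma sqrt_le_sq a b : 0 <= b -> a <= b * b -> sqrt a <= b.
Proof. intros. rewrite <- (sqrt_square b) by auto. apply sqrt_le_1_alt; auto. Qed.

Lemma sqrt_lt_sq a b : 0 <= a -> 0 <= b -> a < b * b -> sqrt a < b.
Proof. intros. rewrite <- (sqrt_square b) by auto. apply sqrt_lt_1_alt; auto. Qed.

Lemma le_sqrt_sq a b : 0 <= a -> a * a <= b -> a <= sqrt b.
Proof. intros. rewrite <- (sqrt_square a) by auto. apply sqrt_le_1_alt; auto. Qed.

Lemma normn_nonneg n x : 0 <= normn n x.
Proof. apply sqrt_pos. Qed.

Lemma normn_sq n x : normn n x * normn n x = dotn n x x.
Proof. apply sqrt_sqrt, dotn_nonneg. Qed.

Lemma dotn_abs n x y : Rabs (dotn n x y) <= normn n x * normn n y.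
Proof.
  pose proof (dotn_CS n x y). pose proof (normn_sq n x). pose proof (normn_sq n y).
  pose proof (normn_nonneg n x). pose proof (normn_nonneg n y).
  apply Rsqr_incr_0_var; [|nra]. rewrite <- Rsqr_abs. unfold Rsqr. nra.
Qed.

Lemma dotn_add_sq n x y : dotn n (fun i => x i + y i) (fun i => x i + y i) =
  dotn n x x + 2 * dotn n x y + dotn n y y.
Proof. induction n; [simpl; ring|]. rewrite !dotn_S, IHn; ring. Qed.

Lemma normn_triangle n x y : normn n (fun i => x i + y i) <= normn n x + normn n y.
Proof.
  pose proof (normn_nonneg n x). pose proof (normn_nonneg n y).
  apply sqrt_le_sq; [lra|].
  rewrite dotn_add_sq.
  pose proof (dotn_abs n x y). pose proof (normn_sq n x). pose proof (normn_sq n y).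
  pose proof (Rle_abs (dotn n x y)). nra.
Qed.

Lemma distn_triangle n x y z : distn n x z <= distn n x y + distn n y z.
Proof.
  unfold distn. replace (fun i => x i - z i) with (fun i => (x i - y i) + (y i - z i))
    by (apply functional_extensionality; intros; ring).
  apply (normn_triangle n (fun i => x i - y i) (fun i => y i - z i)).
Qed.

Lemma distn_sym n x y : distn n x y = distn n y x.
Proof. unfold distn, normn. f_equal. apply dotn_ext. intros; ring. Qed.

Lemma distn_self n x : distn n x x = 0.
Proof.
  unfold distn, normn. rewrite (dotn_ext n _ _ (fun _ => 0) (fun _ => 0)) by (intros; ring).
  replace (dotn n (fun _ => 0) (fun _ => 0)) with 0. apply sqrt_0.
  induction n; [reflexivity|]. rewrite dotn_S, <- IHn. ring.
Qed.

Lemma distn_nonneg n x y : 0 <= distn n x y.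
Proof. apply normn_nonneg. Qed.

Lemma coord_le_norm n x i : (i < n)%nat -> Rabs (x i) <= normn n x.
Proof.
  intros H. apply le_sqrt_sq; [apply Rabs_pos|]. rewrite <- Rabs_mult, Rabs_right.
  apply dotn_coord; auto. apply Rle_ge. nra.
Qed.

Lemma coord_le_dist n x y i : (i < n)%nat -> Rabs (x i - y i) <= distn n x y.
Proof. intros H. apply (coord_le_norm n (fun i => x i - y i) i H). Qed.

Lemma normn_lip n x y : Rabs (normn n x - normn n y) <= distn n x y.
Proof.
  assert (H1 : normn n x <= normn n y + distn n x y).
  { unfold distn. replace x with (fun i => y i + (x i - y i)) at 1
      by (apply functional_extensionality; intros; ring). apply normn_triangle. }
  assert (H2 : normn n y <= normn n x + distn n x y).
  { rewrite distn_sym. unfold distn. replace y with (fun i => x i + (y i - x i)) at 1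
      by (apply functional_extensionality; intros; ring). apply normn_triangle. }
  apply Rabs_le. lra.
Qed.

Lemma dist_small n x y r : 0 < r -> (forall i, (i < n)%nat -> Rabs (x i - y i) <= r / (INR n + 1)) ->
  distn n x y < r.
Proof.
  intros Hr H. pose proof (pos_INR n).
  assert (Hd : 0 <= r / (INR n + 1)) by (unfold Rdiv; apply Rmult_le_pos; [lra|apply Rlt_le, Rinv_0_lt_compat; lra]).
  pose proof (dotn_bound n (fun i => x i - y i) _ Hd H).
  unfold distn, normn. apply sqrt_lt_sq; [apply dotn_nonneg|lra|].
  eapply Rle_lt_trans; [apply H1|].
  assert (INR n * (r / (INR n + 1) * (r / (INR n + 1))) = r * r * (INR n / ((INR n + 1) * (INR n + 1)))) by (field; lra).
  rewrite H2.
  assert (INR n / ((INR n + 1) * (INR n + 1)) < 1).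
  { apply (Rmult_lt_reg_r ((INR n + 1) * (INR n + 1))); [nra|].
    unfold Rdiv. rewrite Rmult_assoc, Rinv_l by nra. nra. }
  assert (0 < r * r) by nra. nra.
Qed.

Lemma Rabs_le_inv x d : Rabs x <= d -> -d <= x <= d.
Proof. unfold Rabs; destruct Rcase_abs; intros; lra. Qed.

Definition TnR n := Compactness.Tn n R.

Fixpoint vecT (n : nat) : TnR n -> Vec :=
  match n with
  | O => fun _ _ => 0
  | S k => fun v i => match i with O => fst v | S j => vecT k (snd v) j end
  end.

Fixpoint tnV (n : nat) (x : Vec) : TnR n :=
  match n with
  | O => tt
  | S k => (x O, tnV k (fun j => x (S j)))
  end.

Fixpoint cstT (n : nat) (c : R) : TnR n :=
  match n with O => tt | S k => (c, cstT k c) end.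

Lemma vecT_tnV n x i : (i < n)%nat -> vecT n (tnV n x) i = x i.
Proof.
  revert x i; induction n; intros x i H; [lia|]. destruct i; simpl; auto.
  rewrite IHn; auto; lia.
Qed.

Lemma vecT_out n v i : (n <= i)%nat -> vecT n v i = 0.
Proof.
  revert v i; induction n; intros v i H; simpl; auto. destruct i; [lia|]. apply IHn; lia.
Qed.

Lemma bounded_cst n M x : (forall i, (i < n)%nat -> Rabs (x i) <= M) ->
  Compactness.bounded_n n (cstT n (-M)) (cstT n M) (tnV n x).
Proof.
  revert x; induction n; intros x H; simpl; auto. split.
  - assert (Rabs (x O) <= M) by (apply H; lia). apply Rabs_le_inv in H0. lra.
  - apply IHn. intros i Hi. apply H. lia.
Qed.

Lemma close_coord n d v w : Compactness.close_n n d v w ->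
  forall i, (i < n)%nat -> Rabs (vecT n v i - vecT n w i) < d.
Proof.
  revert v w; induction n; intros v w H i Hi; [lia|]. destruct v as [v1 v2], w as [w1 w2].
  simpl in H. destruct H as [H1 H2]. destruct i; simpl; auto. apply IHn; auto; lia.
Qed.

Lemma compact_ext n A B : (forall x, A x <-> B x) -> compactn n A -> compactn n B.
Proof.
  intros HAB HA I U HU Hc. destruct (HA I U HU) as [l Hl].
  - intros x Ax. apply Hc, HAB, Ax.
  - exists l. intros x Bx. apply Hl, HAB, Bx.
Qed.

Lemma heine_borel n C M : (forall x, C x -> in_Rn n x) ->
  (forall x, C x -> forall i, (i < n)%nat -> Rabs (x i) <= M) ->
  (forall x, in_Rn n x -> ~ C x -> exists r, 0 < r /\ forall y, distn n x y < r -> ~ C y) ->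
  compactn n C.
Proof.
  intros HR HBd HC I U HU Hcov.
  pose (P := fun (v : TnR n) (d : R) => 0 < d /\
     (C (vecT n v) -> exists i, forall y, distn n (vecT n v) y < d * (INR n + 1) -> U i y) /\
     (~ C (vecT n v) -> forall y, distn n (vecT n v) y < d * (INR n + 1) -> ~ C y)).
  assert (HN : 0 < INR n + 1) by (pose proof (pos_INR n); lra).
  assert (Hex : forall v, exists d, P v d).
  { intros v. destruct (classic (C (vecT n v))) as [Cv|Cv].
    - destruct (Hcov _ Cv) as [i Hi]. destruct (HU i _ Hi) as [r [Hr Hr']].
      exists (r / (INR n + 1)). split; [apply Rdiv_lt_0_compat; lra|]. split.
      + intros _. exists i. intros y Hy. apply Hr'.
        replace (r / (INR n + 1) * (INR n + 1)) with r in Hy by (field; lra). auto.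
      + intros; contradiction.
    - assert (in_Rn n (vecT n v)) by (intros i Hi; apply vecT_out; auto).
      destruct (HC _ H Cv) as [r [Hr Hr']].
      exists (r / (INR n + 1)). split; [apply Rdiv_lt_0_compat; lra|]. split.
      + intros; contradiction.
      + intros _ y Hy. apply Hr'.
        replace (r / (INR n + 1) * (INR n + 1)) with r in Hy by (field; lra). auto. }
  pose (dl := fun v => proj1_sig (constructive_indefinite_description _ (Hex v))).
  assert (Hdl : forall v, P v (dl v)) by (intros v; exact (proj2_sig (constructive_indefinite_description _ (Hex v)))).
  pose (delta := fun v => RIneq.mkposreal (dl v) (proj1 (Hdl v))).
  pose proof (Compactness.compactness_list n (cstT n (-M)) (cstT n M) delta) as HCL.
  apply NNPP. intro NG. apply HCL. intros [l Hl]. apply NG.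
  assert (Hl' : exists l' : list I, forall t, In t l -> C (vecT n t) -> exists i, In i l' /\
      forall y, distn n (vecT n t) y < dl t * (INR n + 1) -> U i y).
  { clear Hl. induction l as [|t0 l IH].
    - exists nil. intros t [].
    - destruct IH as [l' Hl'].
      destruct (classic (C (vecT n t0))) as [C0|C0].
      + destruct (proj1 (proj2 (Hdl t0)) C0) as [i0 Hi0]. exists (i0 :: l').
        intros t [<-|Ht] Ct.
        * exists i0. split; [left; auto|auto].
        * destruct (Hl' t Ht Ct) as [i [Hi Hi']]. exists i. split; [right; auto|auto].
      + exists l'. intros t [<-|Ht] Ct; [contradiction|]. apply Hl'; auto. }
  destruct Hl' as [l' Hl']. exists l'. intros x Cx.
  destruct (Hl (tnV n x)) as [t [Ht [_ Hclose]]].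
  { apply bounded_cst. apply HBd; auto. }
  assert (Hd : distn n (vecT n t) x < dl t * (INR n + 1)).
  { apply dist_small. pose proof (proj1 (Hdl t)). nra.
    intros i Hi. replace (dl t * (INR n + 1) / (INR n + 1)) with (dl t) by (field; lra).
    pose proof (close_coord _ _ _ _ Hclose i Hi) as Hc. rewrite vecT_tnV in Hc by auto.
    rewrite Rabs_minus_sym. simpl in Hc. lra. }
  destruct (classic (C (vecT n t))) as [Ct|Ct].
  - destruct (Hl' t Ht Ct) as [i [Hi Hi']]. exists i. split; auto.
  - exfalso. exact (proj2 (proj2 (Hdl t)) Ct x Hd Cx).
Qed.

Lemma ball_open n w r : openn n (fun y => distn n w y < r).
Proof.
  intros y Hy. exists (r - distn n w y). split; [lra|]. intros z Hz.
  pose proof (distn_triangle n w y z). lra.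
Qed.

Lemma compact_closed n K : compactn n K -> forall w, (forall z, K z -> distn n w z <> 0) ->
  exists r, 0 < r /\ forall y, distn n w y < r -> ~ K y.
Proof.
  intros HK w Hw.
  destruct (HK nat (fun k y => / (INR k + 1) < distn n w y)) as [l Hl].
  - intros k y Hy. exists (distn n w y - / (INR k + 1)). split; [lra|]. intros z Hz.
    pose proof (distn_triangle n w z y). rewrite (distn_sym n z y) in H. lra.
  - intros z Kz. pose proof (Hw z Kz). pose proof (distn_nonneg n w z).
    destruct (archimed_cor1 (distn n w z)) as [N [HN1 HN2]]; [lra|].
    exists N. eapply Rle_lt_trans; [|apply HN1]. apply Rinv_le_contravar.
    apply lt_0_INR; auto. lra.
  - exists (/ (INR (list_max l) + 1)). split.
    { apply Rinv_0_lt_compat. pose proof (pos_INR (list_max l)). lra. }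
    intros y Hy Ky. destruct (Hl y Ky) as [k [Hk Hk']].
    assert (k <= list_max l)%nat.
    { pose proof (proj1 (list_max_le l (list_max l)) (le_n _)) as HF.
      rewrite Forall_forall in HF. apply HF; auto. }
    apply le_INR in H. pose proof (pos_INR k).
    assert (/ (INR (list_max l) + 1) <= / (INR k + 1)) by (apply Rinv_le_contravar; lra).
    lra.
Qed.

Lemma compact_bounded n K : compactn n K -> exists M, forall z, K z -> normn n z <= M.
Proof.
  intros HK. destruct (HK nat (fun k y => normn n y < INR k)) as [l Hl].
  - intros k y Hy. exists (INR k - normn n y). split; [lra|]. intros z Hz.
    pose proof (normn_lip n z y). rewrite distn_sym in Hz. apply Rabs_le_inv in H. lra.
  - intros z Kz. pose proof (normn_nonneg n z).
    destruct (archimed_cor1 (/ (normn n z + 1))) as [N [HN1 HN2]].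
    { apply Rinv_0_lt_compat; lra. }
    exists N. apply lt_0_INR in HN2.
    destruct (Rle_lt_dec (INR N) (normn n z)) as [Hc|Hc]; auto.
    exfalso. assert (/ (normn n z + 1) <= / INR N) by (apply Rinv_le_contravar; lra). lra.
  - exists (INR (list_max l)). intros z Kz. destruct (Hl z Kz) as [k [Hk Hk']].
    assert (k <= list_max l)%nat.
    { pose proof (proj1 (list_max_le l (list_max l)) (le_n _)) as HF.
      rewrite Forall_forall in HF. apply HF; auto. }
    apply le_INR in H. lra.
Qed.

Lemma closed_subset n A B : compactn n B -> (forall x, A x -> B x) ->
  (forall x, B x -> ~ A x -> exists r, 0 < r /\ forall y, distn n x y < r -> ~ A y) ->
  compactn n A.
Proof.
  intros HB HAB HC I U HU Hcov.
  pose (V := fun y => exists x r, 0 < r /\ (forall z, distn n x z < r -> ~ A z) /\ distn n x y < r).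
  destruct (HB (option I) (fun o => match o with Some i => U i | None => V end)) as [l Hl].
  - intros [i|]; auto. intros y [x [r [Hr [Hr' Hy]]]]. exists (r - distn n x y). split; [lra|].
    intros z Hz. exists x, r. split; auto. split; auto. pose proof (distn_triangle n x y z). lra.
  - intros x Bx. destruct (classic (A x)) as [Ax|Ax].
    + destruct (Hcov x Ax) as [i Hi]. exists (Some i). auto.
    + destruct (HC x Bx Ax) as [r [Hr Hr']]. exists None. exists x, r. rewrite distn_self. auto.
  - exists (flat_map (fun o => match o with Some i => i :: nil | None => nil end) l).
    intros x Ax. destruct (Hl x (HAB x Ax)) as [[i|] [Ho Hx]].
    + exists i. split; auto. apply in_flat_map. exists (Some i). split; auto. left; auto.
    + exfalso. destruct Hx as [x0 [r [Hr [Hr' Hy]]]]. exact (Hr' x Hy Ax).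
Qed.

Lemma dotn_lin2 n a b c d x y : dotn n (fun i => a * x i + b * y i) (fun i => c * x i + d * y i) =
  a * c * dotn n x x + (a * d + b * c) * dotn n x y + b * d * dotn n y y.
Proof. induction n; [simpl; ring|]. rewrite !dotn_S, IHn; ring. Qed.

Lemma dotn_lin1 n a b x y z : dotn n z (fun i => a * x i + b * y i) = a * dotn n z x + b * dotn n z y.
Proof. induction n; [simpl; ring|]. rewrite !dotn_S, IHn; ring. Qed.

Lemma grad_unique m O r1 r2 g1 g2 t : (forall x, O x -> sphere m x) -> rel_open_sphere m O ->
  is_gradient_on m O r1 g1 -> is_gradient_on m O r2 g2 -> (forall x, r2 x = r1 x + t) ->
  forall x, O x -> g2 x = g1 x.
Proof.
  intros HS HO H1 H2 Hrt x Ox.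
  destruct (H1 x Ox) as [R1 [T1 D1]]. destruct (H2 x Ox) as [R2 [T2 D2]].
  destruct (HS x Ox) as [Rx Sx].
  set (v := fun i => 1 * g2 x i + (-1) * g1 x i).
  assert (Hxv : dotn (S m) x v = 0) by (unfold v; rewrite dotn_lin1; lra).
  assert (Hv0 : dotn (S m) v v = 0).
  { apply NNPP. intro Hne. pose proof (dotn_nonneg (S m) v).
    set (N2 := dotn (S m) v v) in *. assert (HN2 : 0 < N2) by lra.
    set (N := sqrt N2). assert (HN : 0 < N) by (apply sqrt_lt_R0; auto).
    assert (HNN : N * N = N2) by (apply sqrt_sqrt; lra).
    destruct (D1 (N / 8)) as [d1 [Hd1 E1]]; [lra|].
    destruct (D2 (N / 8)) as [d2 [Hd2 E2]]; [lra|].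
    destruct (HO x Ox) as [r [Hr Er]].
    set (mu := Rmin (Rmin d1 d2) (Rmin r 1)).
    assert (Hmu : 0 < mu /\ mu <= d1 /\ mu <= d2 /\ mu <= r /\ mu <= 1).
    { pose proof (Rmin_l (Rmin d1 d2) (Rmin r 1)). pose proof (Rmin_r (Rmin d1 d2) (Rmin r 1)).
      pose proof (Rmin_l d1 d2). pose proof (Rmin_r d1 d2). pose proof (Rmin_l r 1). pose proof (Rmin_r r 1).
      fold mu in H0, H3. split; [|lra].
      unfold mu. apply Rmin_glb_lt; apply Rmin_glb_lt; lra. }
    set (s := mu / (2 * N)).
    assert (HsN : s * N = mu / 2) by (unfold s; field; lra).
    assert (Hs : 0 < s) by (unfold s; apply Rdiv_lt_0_compat; lra).
    set (c := sqrt (1 + s * s * N2)).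
    assert (Hcc : c * c = 1 + s * s * N2) by (apply sqrt_sqrt; nra).
    assert (Hc1 : 1 <= c) by (apply le_sqrt_sq; nra).
    set (y := fun i => (1 / c) * x i + (s / c) * v i).
    assert (Hyy : dotn (S m) y y = 1).
    { unfold y. rewrite dotn_lin2. rewrite Sx, Hxv. fold N2.
      transitivity ((1 + s * s * N2) / (c * c)); [field; lra|]. rewrite <- Hcc. field. lra. }
    assert (HyR : in_Rn (S m) y).
    { intros i Hi. unfold y, v. rewrite Rx, R1, R2 by auto. ring. }
    assert (Hdiff : (fun i => y i - x i) = (fun i => (1 / c - 1) * x i + (s / c) * v i)).
    { apply functional_extensionality. intros i. unfold y. ring. }
    assert (Hdd : dotn (S m) (fun i => y i - x i) (fun i => y i - x i) <= s * s * N2).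
    { rewrite Hdiff, dotn_lin2, Sx, Hxv. fold N2.
      transitivity (((1 - c) * (1 - c) + s * s * N2) / (c * c)); [right; field; try lra|].
      replace (s * s * N2) with (c * c - 1) by lra.
      replace (((1 - c) * (1 - c) + (c * c - 1)) / (c * c)) with (c * c - 1 - (c - 1) * (c - 1) * (c + 2) / c)
        by (field; lra).
      assert (0 <= (c - 1) * (c - 1) * (c + 2) / c).
      { unfold Rdiv. apply Rmult_le_pos; [apply Rmult_le_pos; [nra|lra]|]. apply Rlt_le, Rinv_0_lt_compat; lra. }
      lra. }
    assert (Hdist : distn (S m) y x <= mu / 2).
    { unfold distn, normn. apply sqrt_le_sq; [lra|]. rewrite <- HsN. nra. }
    assert (Oy : O y).
    { apply Er. split; auto. rewrite distn_sym. lra. }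
    specialize (E1 y Oy ltac:(lra)). specialize (E2 y Oy ltac:(lra)).
    rewrite !Hrt in E2.
    assert (Hdv : dotn (S m) v (fun i => y i - x i) = s / c * N2).
    { rewrite Hdiff, dotn_lin1, (dotn_comm _ v x), Hxv. fold N2. ring. }
    assert (Hdv' : dotn (S m) v (fun i => y i - x i) =
      dotn (S m) (g2 x) (fun i => y i - x i) - dotn (S m) (g1 x) (fun i => y i - x i)).
    { unfold v. rewrite dotn_lin. ring. }
    apply Rabs_le_inv in E1. apply Rabs_le_inv in E2.
    assert (s / c * N2 <= 2 * (N / 8) * distn (S m) y x) by lra.
    assert (s / c * N2 <= N / 4 * (mu / 2)).
    { pose proof (distn_nonneg (S m) y x). nra. }
    rewrite <- HsN in H3.
    assert (1 / c <= 1 / 4).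
    { rewrite <- HNN in H3. unfold Rdiv in *. apply (Rmult_le_reg_r (s * N * N)). 
      apply Rmult_lt_0_compat; nra. nra. }
    assert (s * s * N2 <= 1 / 4) by (rewrite <- HNN; nra).
    assert (c <= 2) by nra.
    assert (1 / 2 <= 1 / c) by (unfold Rdiv; rewrite !Rmult_1_l; apply Rinv_le_contravar; lra).
    lra. }
  apply functional_extensionality. intros i.
  destruct (Nat.lt_ge_cases i (S m)) as [Hi|Hi].
  - pose proof (dotn_zero _ _ Hv0 i Hi). unfold v in H. lra.
  - rewrite R1, R2 by auto. reflexivity.
Qed.

Definition cont_at (m : nat) (O : Vec -> Prop) (f : Vec -> R) (x : Vec) : Prop :=
  forall eps, 0 < eps -> exists delta, 0 < delta /\
    forall y, O y -> distn (S m) y x < delta -> Rabs (f y - f x) < eps.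

Section C.
Variables (m : nat) (O : Vec -> Prop) (x : Vec).

Lemma cont_const c : cont_at m O (fun _ => c) x.
Proof. intros eps He. exists 1. split; [lra|]. intros. rewrite Rminus_diag, Rabs_R0. auto. Qed.

Lemma cont_coord k : (k < S m)%nat -> cont_at m O (fun y => y k) x.
Proof.
  intros Hk eps He. exists eps. split; auto. intros y _ Hy.
  eapply Rle_lt_trans; [apply (coord_le_dist (S m) y x k Hk)|auto].
Qed.

Lemma cont_add f h : cont_at m O f x -> cont_at m O h x -> cont_at m O (fun y => f y + h y) x.
Proof.
  intros Hf Hh eps He. destruct (Hf (eps/2)) as [d1 [Hd1 E1]]; [lra|].
  destruct (Hh (eps/2)) as [d2 [Hd2 E2]]; [lra|].
  exists (Rmin d1 d2). split; [apply Rmin_glb_lt; auto|]. intros y Oy Hy.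
  pose proof (Rmin_l d1 d2). pose proof (Rmin_r d1 d2).
  specialize (E1 y Oy ltac:(lra)). specialize (E2 y Oy ltac:(lra)).
  replace (f y + h y - (f x + h x)) with ((f y - f x) + (h y - h x)) by ring.
  eapply Rle_lt_trans; [apply Rabs_triang|]. lra.
Qed.

Lemma cont_mul f h : cont_at m O f x -> cont_at m O h x -> cont_at m O (fun y => f y * h y) x.
Proof.
  intros Hf Hh eps He.
  set (A := Rabs (f x)). set (B := Rabs (h x)).
  assert (HA : 0 <= A) by apply Rabs_pos. assert (HB : 0 <= B) by apply Rabs_pos.
  set (eta := Rmin 1 (eps / (A + B + 1))).
  assert (Heta : 0 < eta /\ eta <= 1 /\ eta * (A + B + 1) <= eps).
  { pose proof (Rmin_l 1 (eps / (A + B + 1))). pose proof (Rmin_r 1 (eps / (A + B + 1))).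
    assert (0 < eps / (A + B + 1)) by (apply Rdiv_lt_0_compat; lra).
    fold eta in H, H0.
    split; [unfold eta; apply Rmin_glb_lt; [exact Rlt_0_1|exact H1]|]. split; [lra|].
    apply (Rmult_le_compat_r (A + B + 1)) in H0; [|lra].
    unfold Rdiv in H0. rewrite Rmult_assoc, Rinv_l in H0 by lra. lra. }
  destruct (Hf eta) as [d1 [Hd1 E1]]; [lra|].
  destruct (Hh eta) as [d2 [Hd2 E2]]; [lra|].
  exists (Rmin d1 d2). split; [apply Rmin_glb_lt; auto|]. intros y Oy Hy.
  pose proof (Rmin_l d1 d2). pose proof (Rmin_r d1 d2).
  specialize (E1 y Oy ltac:(lra)). specialize (E2 y Oy ltac:(lra)).
  replace (f y * h y - f x * h x) with ((f y - f x) * (h x + (h y - h x)) + f x * (h y - h x)) by ring.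
  eapply Rle_lt_trans; [apply Rabs_triang|]. rewrite !Rabs_mult.
  pose proof (Rabs_triang (h x) (h y - h x)). fold B in H1.
  pose proof (Rabs_pos (f y - f x)). pose proof (Rabs_pos (h y - h x)). fold A.
  assert (Rabs (f y - f x) * Rabs (h x + (h y - h x)) <= eta * (B + eta)).
  { apply Rmult_le_compat; try lra; apply Rabs_pos. }
  assert (A * Rabs (h y - h x) <= A * eta) by (apply Rmult_le_compat_l; lra).
  destruct (Req_dec A 0) as [HA0|HA0].
  - rewrite HA0 in *. assert (Rabs (f y - f x) * Rabs (h x + (h y - h x)) < eta * (B + eta) \/
       Rabs (f y - f x) * Rabs (h x + (h y - h x)) <= eta * (B+eta)) by lra.
    assert (Rabs (f y - f x) * Rabs (h x + (h y - h x)) < eta * (B + 1) + eta * 0 \/ True) by auto.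
    assert (Rabs (f y - f x) * Rabs (h x + (h y - h x)) < eta * (B + 1 + 1)).
    { eapply Rle_lt_trans; [apply H4|]. nra. }
    nra.
  - assert (A * Rabs (h y - h x) < A * eta) by (apply Rmult_lt_compat_l; lra). nra.
Qed.

Lemma cont_exp f : cont_at m O f x -> cont_at m O (fun y => exp (f y)) x.
Proof.
  intros Hf eps He.
  pose proof (derivable_continuous exp derivable_exp (f x)) as Hc.
  destruct (Hc eps He) as [alp [Ha Ea]].
  destruct (Hf alp Ha) as [d [Hd Ed]]. exists d. split; auto. intros y Oy Hy.
  destruct (Req_dec (f y) (f x)) as [E|E].
  - rewrite E, Rminus_diag, Rabs_R0. auto.
  - apply (Ea (f y)). split.
    + split; [exact I|auto].
    + apply Ed; auto.
Qed.

Lemma cont_ext f h : (forall y, f y = h y) -> cont_at m O f x -> cont_at m O h x.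
Proof.
  intros E Hf eps He. destruct (Hf eps He) as [d [Hd Ed]]. exists d. split; auto.
  intros. rewrite <- !E. auto.
Qed.

Lemma cont_rho rho g : is_gradient_on m O rho g -> O x -> cont_at m O rho x.
Proof.
  intros Hg Ox eps He. destruct (Hg x Ox) as [_ [_ D]].
  destruct (D 1) as [d [Hd Ed]]; [lra|].
  set (L := normn (S m) (g x) + 1). assert (HL : 1 <= L) by (pose proof (normn_nonneg (S m) (g x)); unfold L; lra).
  exists (Rmin d (eps / L)). split.
  { apply Rmin_glb_lt; auto. apply Rdiv_lt_0_compat; lra. }
  intros y Oy Hy. pose proof (Rmin_l d (eps / L)). pose proof (Rmin_r d (eps / L)).
  specialize (Ed y Oy ltac:(lra)).
  pose proof (dotn_abs (S m) (g x) (fun i => y i - x i)) as Hab.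
  change (normn (S m) (fun i => y i - x i)) with (distn (S m) y x) in Hab.
  pose proof (distn_nonneg (S m) y x).
  assert (Rabs (rho y - rho x) <= L * distn (S m) y x).
  { replace (rho y - rho x) with ((rho y - rho x - dotn (S m) (g x) (fun i => y i - x i)) + dotn (S m) (g x) (fun i => y i - x i)) by ring.
    eapply Rle_trans; [apply Rabs_triang|]. unfold L. lra. }
  assert (L * distn (S m) y x < L * (eps / L)) by (apply Rmult_lt_compat_l; lra).
  replace (L * (eps / L)) with eps in H3 by (field; lra). lra.
Qed.

Lemma cont_gcoord g k : continuous_on_vec m O g -> O x -> (k < S m)%nat -> cont_at m O (fun y => g y k) x.
Proof.
  intros Hg Ox Hk eps He. destruct (Hg x Ox eps He) as [d [Hd Ed]]. exists d. split; auto.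
  intros y Oy Hy. eapply Rle_lt_trans; [apply (coord_le_dist (S m) (g y) (g x) k Hk)|]. auto.
Qed.

Lemma cont_gnorm2 g : continuous_on_vec m O g -> O x -> cont_at m O (fun y => dotn (S m) (g y) (g y)) x.
Proof.
  intros Hg Ox. apply (cont_ext (fun y => normn (S m) (g y) * normn (S m) (g y))).
  { intros; apply normn_sq. }
  assert (cont_at m O (fun y => normn (S m) (g y)) x).
  { intros eps He. destruct (Hg x Ox eps He) as [d [Hd Ed]]. exists d. split; auto.
    intros y Oy Hy. eapply Rle_lt_trans; [apply normn_lip|]. auto. }
  apply cont_mul; auto.
Qed.

Lemma cont_finite (F : Vec -> Vec) : (forall i, cont_at m O (fun y => F y i) x) ->
  forall n eps, 0 < eps -> exists delta, 0 < delta /\ forall y, O y -> distn (S m) y x < delta ->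
    forall i, (i < n)%nat -> Rabs (F y i - F x i) < eps.
Proof.
  intros HF n. induction n; intros eps He.
  - exists 1. split; [lra|]. intros; lia.
  - destruct (IHn eps He) as [d1 [Hd1 E1]]. destruct (HF n eps He) as [d2 [Hd2 E2]].
    exists (Rmin d1 d2). split; [apply Rmin_glb_lt; auto|]. intros y Oy Hy i Hi.
    pose proof (Rmin_l d1 d2). pose proof (Rmin_r d1 d2).
    destruct (Nat.eq_dec i n) as [->|Hn].
    + apply E2; auto; lra.
    + apply E1; auto; [lra|lia].
Qed.

End C.

Lemma phi0 m r g x : phi_map m r g x 0%nat =
  exp (r x) / 2 * (1 + exp (-2 * r x) * (1 + dotn (S m) (g x) (g x))).
Proof. reflexivity. Qed.

Lemma phiS m r g x k : (k <= m)%nat -> phi_map m r g x (S k) =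
  phi_map m r g x 0%nat * x k + exp (- r x) * (- x k + g x k).
Proof. intros H. unfold phi_map. cbn beta zeta iota. rewrite (proj2 (Nat.leb_le _ _) H). reflexivity. Qed.

Lemma phiS_out m r g x k : (m < k)%nat -> phi_map m r g x (S k) = 0.
Proof. intros H. unfold phi_map. cbn beta zeta iota. rewrite (proj2 (Nat.leb_gt _ _) H). reflexivity. Qed.

Lemma phi_in_Rn m r g x : in_Rn (S (S m)) (phi_map m r g x).
Proof. intros i Hi. destruct i; [lia|]. apply phiS_out. lia. Qed.

Lemma exp_m2 u : exp (-2 * u) = / (exp u * exp u).
Proof. replace (-2 * u) with (- (u + u)) by ring. rewrite exp_Ropp, exp_plus. reflexivity. Qed.

Lemma lor_sum m z : lor m z z = - (z 0%nat * z 0%nat) + dotn (S m) (fun i => z (S i)) (fun i => z (S i)).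
Proof. reflexivity. Qed.

Lemma phi_hyp m r g x : sphere m x -> dotn (S m) x (g x) = 0 -> hyp m (phi_map m r g x).
Proof.
  intros [Rx Sx] Tx.
  set (E := exp (r x)). set (G := dotn (S m) (g x) (g x)). set (b := exp (- r x)).
  assert (HE : 0 < E) by apply exp_pos. assert (Hb : b = / E) by apply exp_Ropp.
  assert (HG : 0 <= G) by apply dotn_nonneg.
  set (a := phi_map m r g x 0%nat).
  assert (Ha : a = E / 2 * (1 + / (E * E) * (1 + G))) by (unfold a; rewrite phi0, exp_m2; reflexivity).
  split; [apply phi_in_Rn|]. split.
  - rewrite lor_sum. fold a.
    rewrite (dotn_ext (S m) _ _ (fun i => (a - b) * x i + b * g x i) (fun i => (a - b) * x i + b * g x i)).
    2:{ intros i Hi. rewrite phiS by lia. fold a b. ring. }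
    rewrite dotn_lin2, Sx, Tx. fold G. rewrite Ha, Hb. field. lra.
  - fold a. rewrite Ha. apply Rmult_lt_0_compat; [lra|].
    assert (0 < / (E * E)) by (apply Rinv_0_lt_compat; nra). nra.
Qed.

Lemma sq_close a b r : Rabs (a - b) <= r -> r <= 1 -> Rabs (a * a - b * b) <= r * (2 * Rabs b + 1).
Proof.
  intros H1 H2. replace (a * a - b * b) with ((a - b) * ((a - b) + 2 * b)) by ring.
  rewrite Rabs_mult. pose proof (Rabs_triang (a - b) (2 * b)).
  rewrite Rabs_mult, (Rabs_right 2) in H by lra.
  pose proof (Rabs_pos (a - b)). pose proof (Rabs_pos b).
  apply Rmult_le_compat; try lra. apply Rabs_pos.
Qed.

Lemma Kpp_compact m M : compactn (S (S m)) (fun z => hyp m z /\ z 0%nat <= M).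
Proof.
  apply (heine_borel _ _ M).
  - intros z [[H _] _]. auto.
  - intros z [[HR [HL Hp]] HM] i Hi. destruct i.
    + rewrite Rabs_right; lra.
    + rewrite lor_sum in HL. assert (i < S m)%nat by lia.
      pose proof (dotn_coord (S m) (fun i => z (S i)) i H). cbv beta in H0.
      unfold Rabs; destruct Rcase_abs; nra.
  - intros w Hw NK. destruct (classic (lor m w w = -1)) as [HL|HL].
    + destruct (Rle_lt_dec (w 0%nat) 0) as [H0|H0].
      * exists 1. split; [lra|]. intros y Hy [[_ [_ Hp]] _].
        pose proof (coord_le_dist (S (S m)) w y 0 ltac:(lia)). apply Rabs_le_inv in H.
        rewrite lor_sum in HL. pose proof (dotn_nonneg (S m) (fun i => w (S i))).
        assert (w 0%nat <= -1) by nra. lra.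
      * assert (M < w 0%nat).
        { apply NNPP. intro. apply NK. split; [split; [auto|split; auto]|lra]. }
        exists (w 0%nat - M). split; [lra|]. intros y Hy [_ HM].
        pose proof (coord_le_dist (S (S m)) w y 0 ltac:(lia)) as Hc. apply Rabs_le_inv in Hc. lra.
    + set (eps := Rabs (lor m w w + 1)).
      assert (He : 0 < eps) by (unfold eps; apply Rabs_pos_lt; lra).
      set (L := 2 * normn (S (S m)) w + 1 + 2 * (2 * Rabs (w 0%nat) + 1)).
      assert (HL1 : 1 <= L) by (pose proof (normn_nonneg (S (S m)) w); pose proof (Rabs_pos (w 0%nat)); unfold L; lra).
      set (r := Rmin 1 (eps / (2 * L))).
      assert (Hr : 0 < r /\ r <= 1 /\ r * L <= eps / 2).
      { pose proof (Rmin_l 1 (eps / (2 * L))). pose proof (Rmin_r 1 (eps / (2 * L))). fold r in H, H0.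
        assert (0 < eps / (2 * L)) by (apply Rdiv_lt_0_compat; lra).
        split; [unfold r; apply Rmin_glb_lt; [exact Rlt_0_1|exact H1]|]. split; [lra|].
        apply (Rmult_le_compat_r L) in H0; [|lra].
        replace (eps / (2 * L) * L) with (eps / 2) in H0 by (field; lra). lra. }
      exists r. split; [lra|]. intros y Hy [[_ [HLy _]] _].
      assert (Hlor : forall z, lor m z z = normn (S (S m)) z * normn (S (S m)) z - 2 * (z 0%nat * z 0%nat)).
      { intros z. rewrite normn_sq, lor_sum.
        change (dotn (S (S m)) z z) with (sum_f_R0 (fun i => z i * z i) (S m)).
        change (dotn (S m) (fun i => z (S i)) (fun i => z (S i))) with (sum_f_R0 (fun i => z (S i) * z (S i)) m).
        rewrite (decomp_sum (fun i => z i * z i) (S m)) by lia. simpl pred. ring. }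
      pose proof (normn_lip (S (S m)) y w). rewrite distn_sym in H.
      pose proof (coord_le_dist (S (S m)) y w 0 ltac:(lia)). rewrite distn_sym in H0.
      pose proof (sq_close (normn (S (S m)) y) (normn (S (S m)) w) r ltac:(lra) ltac:(lra)).
      pose proof (sq_close (y 0%nat) (w 0%nat) r ltac:(lra) ltac:(lra)).
      rewrite (Rabs_right (normn (S (S m)) w)) in H1 by (apply Rle_ge, normn_nonneg).
      assert (Rabs (lor m y y - lor m w w) <= r * L).
      { rewrite !Hlor. replace (normn (S (S m)) y * normn (S (S m)) y - 2 * (y 0%nat * y 0%nat) -
          (normn (S (S m)) w * normn (S (S m)) w - 2 * (w 0%nat * w 0%nat))) with
          ((normn (S (S m)) y * normn (S (S m)) y - normn (S (S m)) w * normn (S (S m)) w) +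
           (-2) * (y 0%nat * y 0%nat - w 0%nat * w 0%nat)) by ring.
        eapply Rle_trans; [apply Rabs_triang|]. rewrite Rabs_mult, (Rabs_left (-2)) by lra.
        unfold L. lra. }
      rewrite HLy in H3. unfold eps in *.
      replace (-1 - lor m w w) with (- (lor m w w + 1)) in H3 by ring. rewrite Rabs_Ropp in H3. lra.
Qed.

Lemma phi_cont m O r g x : O x -> cont_at m O r x -> continuous_on_vec m O g ->
  forall i, cont_at m O (fun y => phi_map m r g y i) x.
Proof.
  intros Ox Hr Hg.
  assert (Ha : cont_at m O (fun y => phi_map m r g y 0%nat) x).
  { apply (cont_ext m O x (fun y => exp (r y) * / 2 * (1 + exp (-2 * r y) * (1 + dotn (S m) (g y) (g y))))).
    { intros y. rewrite phi0. reflexivity. }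
    apply cont_mul; [apply cont_mul; [apply cont_exp; auto|apply cont_const]|].
    apply cont_add; [apply cont_const|]. apply cont_mul.
    - apply cont_exp. apply cont_mul; [apply cont_const|auto].
    - apply cont_add; [apply cont_const|]. apply cont_gnorm2; auto. }
  intros [|k]; auto. destruct (Compare_dec.le_lt_dec k m) as [Hk|Hk].
  - apply (cont_ext m O x (fun y => phi_map m r g y 0%nat * y k + exp ((-1) * r y) * ((-1) * y k + g y k))).
    { intros y. rewrite phiS by auto. replace (- r y) with ((-1) * r y) by ring. ring. }
    apply cont_add; [apply cont_mul; auto; apply cont_coord; lia|].
    apply cont_mul; [apply cont_exp; apply cont_mul; [apply cont_const|auto]|].
    apply cont_add; [apply cont_mul; [apply cont_const|apply cont_coord; lia]|].
    apply cont_gcoord; auto; lia.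
  - apply (cont_ext m O x (fun _ => 0)). { intros y. rewrite phiS_out by auto. reflexivity. }
    apply cont_const.
Qed.

Theorem mainTheorem4 (m : nat) (Omega : Vec -> Prop) (rho : Vec -> R) (g : Vec -> Vec) :
  sphere_domain m Omega ->
  C1_on m Omega rho g ->
  proper_map m Omega (phi_map m rho g) ->
  forall (t : R) (gt : Vec -> Vec),
    is_gradient_on m Omega (fun x => rho x + t) gt ->
    proper_map m Omega (phi_map m (fun x => rho x + t) gt).
Proof.
  intros HD HC1 Hprop t gt Hgt.
  destruct HD as [HS [_ [HO _]]]. destruct HC1 as [Hg Hgc].
  assert (Heq : forall x, Omega x -> gt x = g x).
  { intros x Ox. apply (grad_unique m Omega rho (fun x => rho x + t) g gt t HS HO Hg Hgt); auto. }
  intros K HKH HK.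
  apply (compact_ext _ (fun x => Omega x /\ K (phi_map m (fun x => rho x + t) g x))).
  { intros x. assert (Omega x -> phi_map m (fun x => rho x + t) gt x = phi_map m (fun x => rho x + t) g x).
    { intros Ox. unfold phi_map. rewrite (Heq x Ox). reflexivity. }
    split; intros [Ox Kx]; split; auto; [rewrite H|rewrite <- H]; auto. }
  destruct (compact_bounded _ _ HK) as [M HM].
  set (W := exp t). assert (HW : 0 < W) by apply exp_pos.
  set (M' := (W + / W) * M).
  apply (closed_subset _ _ (fun x => Omega x /\ (hyp m (phi_map m rho g x) /\ phi_map m rho g x 0%nat <= M'))).
  - apply (Hprop (fun z => hyp m z /\ z 0%nat <= M')). { intros z [H _]; auto. } apply Kpp_compact.
  - intros x [Ox Kx]. split; auto.
    assert (Tx : dotn (S m) x (g x) = 0) by (destruct (Hg x Ox) as [_ [T _]]; auto).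
    split; [apply phi_hyp; auto|].
    assert (HEt : phi_map m (fun x => rho x + t) g x 0%nat <= M).
    { eapply Rle_trans; [apply Rle_abs|]. eapply Rle_trans; [apply (coord_le_norm (S (S m)))|apply HM; auto]. lia. }
    rewrite phi0 in HEt |- *. rewrite exp_m2 in HEt |- *. rewrite exp_plus in HEt. fold W in HEt.
    set (E := exp (rho x)) in *. set (G := dotn (S m) (g x) (g x)) in *.
    assert (HE : 0 < E) by apply exp_pos. assert (HG : 0 <= G) by apply dotn_nonneg.
    set (Et := E * W / 2 * (1 + / (E * W * (E * W)) * (1 + G))) in *.
    assert (HWi : 0 < W + / W) by (assert (0 < / W) by (apply Rinv_0_lt_compat; auto); lra).
    assert ((W + / W) * Et - E / 2 * (1 + / (E * E) * (1 + G)) = (E * W * W + (1 + G) / (E * W * W)) / 2).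
    { unfold Et. field. split; lra. }
    assert (0 <= (E * W * W + (1 + G) / (E * W * W)) / 2).
    { assert (0 < E * W * W) by (apply Rmult_lt_0_compat; [apply Rmult_lt_0_compat|]; auto).
      assert (0 <= (1 + G) / (E * W * W)) by (apply Rmult_le_pos; [lra|apply Rlt_le, Rinv_0_lt_compat; auto]).
      lra. }
    assert ((W + / W) * Et <= M') by (unfold M'; apply Rmult_le_compat_l; lra).
    lra.
  - intros x [Ox _] NA.
    set (F := phi_map m (fun x => rho x + t) g).
    assert (NK : ~ K (F x)) by (intro; apply NA; split; auto).
    destruct (compact_closed _ _ HK (F x)) as [r [Hr Hr']].
    { intros z Kz Hd. apply NK. replace (F x) with z; auto.
      apply functional_extensionality. intros i.
      destruct (Nat.lt_ge_cases i (S (S m))) as [Hi|Hi].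
      - unfold distn, normn in Hd. apply sqrt_eq_0 in Hd; [|apply dotn_nonneg].
        pose proof (dotn_zero _ _ Hd i Hi). cbv beta in H. lra.
      - destruct (HKH z Kz) as [Rz _]. rewrite Rz by auto. unfold F. rewrite phi_in_Rn by auto. auto. }
    assert (HN : 0 < INR (S (S m)) + 1) by (pose proof (pos_INR (S (S m))); lra).
    destruct (cont_finite m Omega x F) with (n := S (S m)) (eps := r / (INR (S (S m)) + 1)) as [d [Hd Ed]].
    { apply phi_cont; auto. apply cont_add; [apply (cont_rho m Omega x rho g); auto|apply cont_const]. }
    { apply Rdiv_lt_0_compat; lra. }
    exists d. split; auto. intros y Hy [Oy Ky]. apply (Hr' (F y)); auto.
    apply dist_small; [lra|]. intros i Hi. rewrite Rabs_minus_sym. left. apply Ed; auto.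
    rewrite distn_sym; auto.
Qed.
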